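(* Let $G$ be a graph, with vertices labelled $1,\dots,n$, and let $F$ be an easy graph fibration with $F(G)\neq\emptyset$. Let $\mathscr{C}=\{(K,\mathbf{a},\mathbf{b})\mid (K,g_{\mathbf{a}}^{-1}g_{\mathbf{b}})\in F\}$ be the associated group-theoretical graph category, and let $\mathbb{G}$ be the orthogonal compact matrix quantum group whose intertwiner spaces are $\mathrm{span}\{T^G_{\mathbf{K}}\mid \mathbf{K}\in\mathscr{C}(k,l)\}$, $k,l\in\mathbb{N}_0$. Then $$\mathbb{G}=\hat\Gamma\rtimes\mathrm{Aut}\,G,\qquad \Gamma=\mathbb{Z}_2^{*V(G)}/F(G).$$
   Context: Graphs are finite, undirected, without multiple edges, loops allowed, up to isomorphism; graph homomorphisms map edges (including loops) to edges. $\mathbb{Z}_2^{*V}$ is the group generated by the set $V$ subject to $v^2=e$; for a tuple $\mathbf{a}$ of elements of $V$, $g_{\mathbf{a}}$ is the product of its entries; maps of sets induce maps on tuples and homomorphisms of these groups. For a partition $\pi$ of $V(K)$, $K/\pi$ has the blocks as vertices with an edge between two (possibly equal) blocks iff $K$ has an edge between some of their elements; $q_\pi$ the quotient map. A vertex overlap of graphs $K,H$ is a subset $f\subset V(K)\times V(H)$ with each vertex occurring at most once; $K\cup_fH$ is the quotient of $K\sqcup H$ identifying $v,w$ for $(v,w)\in f$; $f_K,f_H$ the induced maps. A graph fibration is a set $F$ of pairs $(K,a)$, $a\in\mathbb{Z}_2^{*V(K)}$, up to $(K,a)\equiv(K',\phi(a))$ for isomorphisms $\phi$, with $(N_0,e),(N_1,e)\in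 F$ ($N_k$ the edgeless graph on $k$ vertices), such that: (F1) $F(K):=\{a\mid(K,a)\in F\}$ is empty or a normal subgroup of $\mathbb{Z}_2^{*V(K)}$; (F2) $F(K)$ is invariant under automorphisms of $K$; (F3) $(K,a),(H,b)\in F$ implies $(K\cup_fH,f_K(a)f_H(b))\in F$ for every vertex overlap $f$. It is easy if (F4): $F(K)\ne\emptyset$ implies $q_\pi(F(K))\subset F(K/\pi)$ for every partition $\pi$ of $V(K)$. Bilabelled graph: $\mathbf{K}=(K,\mathbf{a},\mathbf{b})$, $\mathbf{a}\in V(K)^k$, $\mathbf{b}\in V(K)^l$, up to isomorphism; $\mathscr{C}(k,l)$ are those with $k$ inputs and $l$ outputs. For such $\mathbf{K}$, $T^G_{\mathbf{K}}\colon(\mathbb{C}^n)^{\otimes k}\to(\mathbb{C}^n)^{\otimes l}$ has entries $[T^G_{\mathbf{K}}]_{\mathbf{j}\mathbf{i}}=\#\{\phi\colon K\to G \text{ homomorphism}\mid \phi(\mathbf{a})=\mathbf{i},\phi(\mathbf{b})=\mathbf{j}\}$ (the coefficient of $e_{j_1}\otimes\cdots\otimes e_{j_l}$ in the image of $e_{i_1}\otimes\cdots\otimes e_{i_k}$). Quantum groups: an orthogonal compact matrix quantum group is a pair $(A,u)$, $A$ a $*$-algebra generated by the entries of $u\in M_n(A)$, with $u_{ij}=u_{ij}^*$, $uu^t=u^tu=1$, and $u_{ij}\mapsto\sum_k u_{ik}\otimes u_{kj}$ extending to a $*$-homomorphism $A\to A\otimes A$; its intertwiner spaces are $\mathrm{Mor}(u^{\otimes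 k},u^{\otimes l})=\{T\mid Tu^{\otimes k}=u^{\otimes l}T\}$. By Woronowicz–Tannaka–Krein duality such a quantum group is uniquely determined by its intertwiner spaces. A permutation group $H\subset S_n$ is the quantum group $(O(H),v)$ with $v_{ij}(\sigma)=\delta_{i\sigma(j)}$; here $\mathrm{Aut}\,G\subset S_n$ via the labelling. If $\Gamma$ is a quotient of $\mathbb{Z}_2^{*n}$ by an $H$-invariant normal subgroup, with $\gamma_i\in\mathbb{C}\Gamma$ the images of the generators, then $\hat\Gamma\rtimes H$ is the quantum group $(\mathbb{C}\Gamma\otimes O(H),u)$ with $u_{ij}=\gamma_i\otimes v_{ij}$. *)

(* Defs.v *)
From mathcomp Require Import all_boot all_algebra all_fingroup.
From mathcomp Require Import complex Rstruct boolp.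
Set Implicit Arguments. Unset Strict Implicit. Unset Printing Implicit Defensive.
Import GRing.Theory Num.Theory.
Local Open Scope ring_scope.

Notation CC := (complex Rdefinitions.R).

(** * Graphs: finite, undirected (symmetric adjacency), loops allowed.
    Vertex set 'I_(gv K); graphs are considered up to isomorphism
    (all notions below are isomorphism invariant). *)
Record graph := Graph { gv : nat; gadj : rel 'I_gv; gsym : symmetric gadj }.

Lemma edgeless_sym k : symmetric (fun _ _ : 'I_k => false). Proof. by []. Qed.
Definition edgeless (k : nat) : graph := @Graph k (fun _ _ => false) (@edgeless_sym k).

Definition is_iso (K K' : graph) (phi : 'I_(gv K) -> 'I_(gv K')) : Prop :=
  bijective phi /\ forall x y, @gadj K x y = @gadj K' (phi x) (phi y).

Definition is_hom (K H : graph) (phi : 'I_(gv K) -> 'I_(gv H)) : bool :=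
  [forall x, forall y, @gadj K x y ==> @gadj H (phi x) (phi y)].

(** * The group Z_2^{*V}: elements are represented by words (seq V),
    a word w standing for the product g_w of its letters; two words
    represent the same group element iff they have the same free
    reduction (cancellation of adjacent equal letters, since v^2 = e). *)
Definition push {V : eqType} (x : V) (s : seq V) : seq V :=
  if s is y :: s' then (if x == y then s' else x :: s) else [:: x].
Definition reduce {V : eqType} (w : seq V) : seq V := foldr push [::] w.
Definition geq {V : eqType} (w w' : seq V) : bool := reduce w == reduce w'.
(* product = concatenation, identity = [::], inverse = reversal *)

Definition normal_subgroup {V : eqType} (S : seq V -> Prop) : Prop :=
  [/\ S [::],
      (forall w w', S w -> S w' -> S (w ++ w')),
      (forall w, S w -> S (rev w)) &
      (forall w x, S w -> S (rev x ++ w ++ x))].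

(** L together with a surjection q : V(K) -> V(L) is (a copy
    of) the quotient K/pi by the partition pi = kernel of q, with q the
    quotient map q_pi. [adj] is an adjacency relation on 'I_m. *)
Definition is_quotient (m : nat) (adj : rel 'I_m) (L : graph)
    (q : 'I_m -> 'I_(gv L)) : Prop :=
  (forall i : 'I_(gv L), exists x, q x = i) /\
  (forall i j, @gadj L i j = [exists x, exists y, [&& q x == i, q y == j & adj x y]]).

Definition dunion_adj (K H : graph) : rel 'I_(gv K + gv H) :=
  fun u v => match split u, split v with
             | inl x, inl y => @gadj K x y
             | inr x, inr y => @gadj H x y
             | _, _ => false
             end.

Definition vertex_overlap (K H : graph) (f : 'I_(gv K) -> 'I_(gv H) -> bool) : Prop :=
  (forall x y y', f x y -> f x y' -> y = y') /\
  (forall x x' y, f x y -> f x' y -> x = x').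

Definition overlap_rel (K H : graph) (f : 'I_(gv K) -> 'I_(gv H) -> bool)
    (u v : 'I_(gv K + gv H)) : Prop :=
  u = v \/ (exists x y, f x y /\
            ((u = lshift (gv H) x /\ v = rshift (gv K) y) \/
             (v = lshift (gv H) x /\ u = rshift (gv K) y))).

(** * Graph fibrations.  F K a  means (K, a) ∈ F, for a ∈ Z_2^{*V(K)}. *)
Definition fibration := forall K : graph, seq 'I_(gv K) -> Prop.

Definition graph_fibration (F : fibration) : Prop :=
  (* F is a set of pairs (K, a) with a a group element, up to isomorphism *)
  (forall K (a b : seq 'I_(gv K)), geq a b -> F K a -> F K b) /\
  (forall K K' phi, @is_iso K K' phi -> forall a, F K a <-> F K' (map phi a)) /\
  F (edgeless 0) [::] /\ F (edgeless 1) [::] /\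
  (forall K, (exists a, F K a) -> normal_subgroup (F K)) /\
  (forall K phi, @is_iso K K phi -> forall a, F K a -> F K (map phi a)) /\
  (forall K H (a : seq 'I_(gv K)) (b : seq 'I_(gv H)) f, F K a -> F H b ->
     @vertex_overlap K H f ->
     forall (L : graph) (q : 'I_(gv K + gv H) -> 'I_(gv L)),
       is_quotient (@dunion_adj K H) q ->
       (forall u v, q u = q v <-> @overlap_rel K H f u v) ->
       F L (map (fun x => q (lshift (gv H) x)) a ++
            map (fun y => q (rshift (gv K) y)) b)).

Definition easy_graph_fibration (F : fibration) : Prop :=
  graph_fibration F /\
  (forall K, (exists a, F K a) ->
     forall (L : graph) (q : 'I_(gv K) -> 'I_(gv L)), is_quotient (@gadj K) q ->
     forall a, F K a -> F L (map q a)).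

Record bgraph (k l : nat) := BGraph
  { bg : graph; bg_in : k.-tuple 'I_(gv bg); bg_out : l.-tuple 'I_(gv bg) }.

(** The group-theoretical graph category:  (K, a, b) ∈ C  iff
    (K, g_a^{-1} g_b) ∈ F;  g_a^{-1} is represented by rev a. *)
Definition in_category (F : fibration) k l (K : bgraph k l) : Prop :=
  F (bg K) (rev (@bg_in _ _ K) ++ @bg_out _ _ K).

(** Linear maps (C^n)^{⊗k} -> (C^n)^{⊗l}, as arrays indexed by
    multi-indices j : 'I_l -> 'I_n (row) and i : 'I_k -> 'I_n (column). *)
Definition tmap (n k l : nat) := {ffun 'I_l -> 'I_n} -> {ffun 'I_k -> 'I_n} -> CC.

Definition TK (G : graph) k l (K : bgraph k l) : tmap (gv G) k l :=
  fun j i => (#|[set phi : {ffun 'I_(gv (bg K)) -> 'I_(gv G)} |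
                 [&& is_hom phi,
                     [forall t, phi (tnth (@bg_in _ _ K) t) == i t] &
                     [forall t, phi (tnth (@bg_out _ _ K) t) == j t]]]|)%:R.

Definition in_span_TK (F : fibration) (G : graph) k l (T : tmap (gv G) k l) : Prop :=
  exists s : seq (bgraph k l * CC),
    (forall p, List.In p s -> in_category F p.1) /\
    (forall j i, T j i = \sum_(p <- s) p.2 * @TK G k l p.1 j i).

(** * The quantum group  Γ^ ⋊ Aut G,  Γ = Z_2^{*V(G)} / N,  N = F(G).
    Its algebra is  CΓ ⊗ O(Aut G), which we realise as functions
    Aut G -> CΓ (O(H) = C^H), with pointwise product.  Elements of CΓ
    are given by formal sums  Σ c_p γ_{w_p}  (seq (CC * word)); such a
    formal sum is 0 in CΓ iff for every coset w N the coefficients of the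
    words in that coset sum to zero (γ_w = γ_w' iff g_w^{-1} g_w' ∈ N). *)
Definition fsum (V : Type) := seq (CC * seq V).
Definition fs_scale V (c : CC) (x : fsum V) : fsum V := [seq (c * p.1, p.2) | p <- x].
Definition fs_mul V (x y : fsum V) : fsum V := [seq (p.1 * q.1, p.2 ++ q.2) | p <- x, q <- y].
Definition fs_one V : fsum V := [:: (1, [::])].
Definition cg_zero V (N : seq V -> Prop) (x : fsum V) : Prop :=
  forall w : seq V, \sum_(p <- x | `[< N (rev w ++ p.2) >]) p.1 = 0.

Definition in_Aut (G : graph) (s : {perm 'I_(gv G)}) : Prop :=
  forall x y, @gadj G x y = @gadj G (s x) (s y).

(** Fundamental representation  u_ij = γ_i ⊗ v_ij,  v_ij(σ) = δ_{i, σ(j)},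
    evaluated at σ. *)
Definition u_entry (G : graph) (i j : 'I_(gv G)) (s : {perm 'I_(gv G)}) : fsum 'I_(gv G) :=
  [:: ((i == s j)%:R, [:: i])].

Definition utens (G : graph) k (i i' : {ffun 'I_k -> 'I_(gv G)}) (s : {perm 'I_(gv G)}) :
    fsum 'I_(gv G) :=
  foldr (@fs_mul _) (@fs_one _) [seq u_entry (i t) (i' t) s | t <- enum 'I_k].

(** T ∈ Mor(u^{⊗k}, u^{⊗l}) for Γ^ ⋊ Aut G:  T u^{⊗k} = u^{⊗l} T  entrywise
    in CΓ ⊗ O(Aut G), i.e. at every σ ∈ Aut G. *)
Definition is_intertwiner (G : graph) (N : seq 'I_(gv G) -> Prop) k l
    (T : tmap (gv G) k l) : Prop :=
  forall (j : {ffun 'I_l -> 'I_(gv G)}) (i' : {ffun 'I_k -> 'I_(gv G)})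
         (s : {perm 'I_(gv G)}), in_Aut s ->
    cg_zero N
      (flatten [seq fs_scale (T j i) (utens i i' s) | i <- enum {ffun 'I_k -> 'I_(gv G)}]
       ++ fs_scale (-1)
          (flatten [seq fs_scale (T j' i') (utens j j' s) | j' <- enum {ffun 'I_l -> 'I_(gv G)}])).

(* Main.v *)
Require Import Defs.
From mathcomp Require Import all_boot all_algebra all_fingroup.
From mathcomp Require Import complex Rstruct boolp.
Set Implicit Arguments. Unset Strict Implicit. Unset Printing Implicit Defensive.
Import GRing.Theory Num.Theory.
Local Close Scope ring_scope.

Fixpoint reducedw {V : eqType} (s : seq V) : bool :=
  match s with
  | x :: ((y :: _) as s') => (x != y) && reducedw s'
  | _ => true
  end.

Lemma push_reduced (V : eqType) (x : V) s : reducedw s -> reducedw (push x s).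
Proof.
case: s => [|y s] //=.
case: eqP => [_|/eqP ne].
  by case: s => [|z s] //= /andP[].
by move=> h; rewrite /= ne h.
Qed.

Lemma push_push (V : eqType) (x : V) s : reducedw s -> push x (push x s) = s.
Proof.
case: s => [|y s] /=; first by rewrite eqxx.
case: eqP => [<-|/eqP ne]; last by rewrite /= eqxx.
case: s => [|z s] /=; first by [].
by case/andP => ne _; rewrite (negbTE ne).
Qed.

Lemma foldr_push_reduced (V : eqType) (s : seq V) x : reducedw s -> reducedw (foldr push s x).
Proof. by elim: x => //= a x IH h; apply: push_reduced; apply: IH. Qed.

Lemma cancel_rev (V : eqType) (x : seq V) s : reducedw s -> foldr push s (x ++ rev x) = s.
Proof.
elim: x s => [|a x IH] s hs //=.
rewrite rev_cons -cats1 catA foldr_cat /= IH ?push_push //.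
exact: push_reduced.
Qed.

Lemma reduce_reduced (V : eqType) (w : seq V) : reducedw (reduce w).
Proof. exact: foldr_push_reduced. Qed.

Lemma reduce_cat (V : eqType) (u v : seq V) : reduce (u ++ v) = foldr push (reduce v) u.
Proof. by rewrite /reduce foldr_cat. Qed.

Lemma geq_cancel (V : eqType) (u x v : seq V) : Defs.geq (u ++ x ++ rev x ++ v) (u ++ v).
Proof.
rewrite /Defs.geq !reduce_cat -(foldr_cat push (reduce v) x (rev x)) cancel_rev //.
exact: reduce_reduced.
Qed.
Local Open Scope ring_scope.

Definition ww n k (f : {ffun 'I_k -> 'I_n}) : seq 'I_n := map f (enum 'I_k).
Definition pf n k (s : {perm 'I_n}) (f : {ffun 'I_k -> 'I_n}) : {ffun 'I_k -> 'I_n} :=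
  [ffun t => s (f t)].

Lemma foldr_fs_mul (V : Type) (I : Type) (r : seq I) (c : I -> CC) (x : I -> V) :
  foldr (@fs_mul V) (@fs_one V) [seq [:: (c t, [:: x t])] | t <- r] =
  [:: (foldr (fun t acc => c t * acc) 1 r, map x r)].
Proof.
elim: r => [|t r IH] //=.
by rewrite IH.
Qed.

Lemma foldr_nat_all (I : Type) (r : seq I) (P : pred I) :
  foldr (fun t acc => (P t)%:R * acc) (1 : CC) r = (all P r)%:R.
Proof.
elim: r => [|t r IH] //=; rewrite IH.
by case: (P t); rewrite /= ?mul1r ?mul0r.
Qed.

Lemma utensE (G : graph) k (i i' : {ffun 'I_k -> 'I_(gv G)}) s :
  utens i i' s = [:: ((i == pf s i')%:R, ww i)].
Proof.
rewrite /utens /u_entry.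
rewrite (@foldr_fs_mul _ _ (enum (ordinal k)) (fun t => ((i t == s (i' t))%:R : CC)) (fun t => i t)).
rewrite (foldr_nat_all _ (fun t => i t == s (i' t))).
have -> // : all (fun t => i t == s (i' t)) (enum 'I_k) = (i == pf s i').
apply/allP/eqP => [h|->].
  apply/ffunP => t; rewrite ffunE; apply/eqP/h.
  by rewrite mem_enum.
by move=> t _; rewrite ffunE.
Qed.

Lemma sum_delta (I : finType) (c : I) (A : I -> bool) (F : I -> CC) :
  \sum_(i <- enum I) (if A i then F i * (i == c)%:R else 0) = (if A c then F c else 0).
Proof.
rewrite big_enum /= (bigD1 c) //= eqxx mulr1 big1 ?addr0 // => i /negbTE ->.
by rewrite mulr0; case: ifP.
Qed.

Lemma pf_inv n k (s : {perm 'I_n}) (j j' : {ffun 'I_k -> 'I_n}) :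
  (j == pf s j') = (j' == pf s^-1 j).
Proof.
apply/eqP/eqP => [-> | ->]; apply/ffunP => t; rewrite !ffunE.
  by rewrite -permM mulgV perm1.
by rewrite -permM mulVg perm1.
Qed.

Lemma pfK n k (s : {perm 'I_n}) (j : {ffun 'I_k -> 'I_n}) : pf s^-1 (pf s j) = j.
Proof. by apply/ffunP => t; rewrite !ffunE -permM mulgV perm1. Qed.

Lemma pfVK n k (s : {perm 'I_n}) (j : {ffun 'I_k -> 'I_n}) : pf s (pf s^-1 j) = j.
Proof. by apply/ffunP => t; rewrite !ffunE -permM mulVg perm1. Qed.

Lemma pf1 n k (j : {ffun 'I_k -> 'I_n}) : pf 1 j = j.
Proof. by apply/ffunP => t; rewrite !ffunE perm1. Qed.

Definition IC (G : graph) (N : seq 'I_(gv G) -> Prop) k l (T : tmap (gv G) k l) : Prop :=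
  forall (j : {ffun 'I_l -> 'I_(gv G)}) (i' : {ffun 'I_k -> 'I_(gv G)})
         (s : {perm 'I_(gv G)}), in_Aut s -> forall w : seq 'I_(gv G),
   (if `[< N (rev w ++ ww (pf s i')) >] then T j (pf s i') else 0) +
   (if `[< N (rev w ++ ww j) >] then - T (pf s^-1 j) i' else 0) = 0.

Lemma sum_flatten_map (V : Type) (I : Type) (r : seq I) (f : I -> fsum V) (P : pred (CC * seq V)) :
  \sum_(p <- flatten (map f r) | P p) p.1 = \sum_(i <- r) \sum_(p <- f i | P p) p.1.
Proof.
elim: r => [|x r IH]; first by rewrite !big_nil.
by rewrite /= big_cat big_cons IH.
Qed.

Lemma interE (G : graph) (N : seq 'I_(gv G) -> Prop) k l (T : tmap (gv G) k l) :
  is_intertwiner N T <-> IC N T.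
Proof.
have E : forall j i' s w,
  \sum_(p <- flatten [seq fs_scale (T j i) (utens i i' s) | i <- enum {ffun 'I_k -> 'I_(gv G)}]
       ++ fs_scale (-1)
          (flatten [seq fs_scale (T j' i') (utens j j' s) | j' <- enum {ffun 'I_l -> 'I_(gv G)}])
     | `[< N (rev w ++ p.2) >]) p.1 =
   (if `[< N (rev w ++ ww (pf s i')) >] then T j (pf s i') else 0) +
   (if `[< N (rev w ++ ww j) >] then - T (pf s^-1 j) i' else 0).
  move=> j i' s w.
  rewrite big_cat /fs_scale map_flatten !sum_flatten_map big_map.
  congr (_ + _).
    rewrite -(sum_delta (pf s i') (fun i => `[< N (rev w ++ ww i) >]) (fun i => T j i)).
    rewrite enumT; apply: eq_bigr => i _; rewrite utensE /= big_cons big_nil /=.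
    by case: ifP; rewrite ?addr0.
  rewrite -(sum_delta (pf s^-1 j) (fun _ => `[< N (rev w ++ ww j) >]) (fun j' => - T j' i')).
  rewrite big_map; apply: eq_bigr => j' _; rewrite utensE /= big_cons big_nil /= pf_inv.
  by case: ifP; rewrite ?addr0 // mulN1r mulNr.
split.
  move=> h j i' s hs w; rewrite -E; exact: h.
move=> h j i' s hs w; rewrite E; exact: h.
Qed.
Local Open Scope ring_scope.

Definition NG (V : eqType) (N : seq V -> Prop) :=
  (forall a b, Defs.geq a b -> N a -> N b) /\ normal_subgroup N.

Lemma geq_sym (V : eqType) (a b : seq V) : Defs.geq a b -> Defs.geq b a.
Proof. by rewrite /Defs.geq eq_sym. Qed.

Lemma N_self (V : eqType) (N : seq V -> Prop) x : NG N -> N (rev x ++ x).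
Proof.
case=> hg [h0 _ _ _]; apply: hg h0; apply: geq_sym.
have := geq_cancel [::] (rev x) [::]; by rewrite revK /= !cats0.
Qed.

Lemma N_rev (V : eqType) (N : seq V -> Prop) a b : NG N -> N (rev a ++ b) -> N (rev b ++ a).
Proof. by case=> _ [_ _ hr _] /hr; rewrite rev_cat revK. Qed.

Lemma N_trans (V : eqType) (N : seq V -> Prop) w x y : NG N ->
  N (rev w ++ x) -> N (rev x ++ y) -> N (rev w ++ y).
Proof.
case=> hg [_ hc _ _] h1 h2; have := hc _ _ h1 h2.
apply: hg; rewrite -catA; exact: geq_cancel.
Qed.

Lemma in_Aut1 (G : graph) : in_Aut (1 : {perm 'I_(gv G)}).
Proof. by move=> x y; rewrite !perm1. Qed.

Lemma in_AutV (G : graph) (s : {perm 'I_(gv G)}) : in_Aut s -> in_Aut s^-1.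
Proof. by move=> h x y; rewrite [RHS]h -!permM !mulVg !perm1. Qed.

Definition Pinv (G : graph) k l (T : tmap (gv G) k l) : Prop :=
  forall s, in_Aut s -> forall j i, T (pf s j) (pf s i) = T j i.
Definition Psupp (G : graph) (N : seq 'I_(gv G) -> Prop) k l (T : tmap (gv G) k l) : Prop :=
  forall j i, T j i != 0 -> N (rev (ww i) ++ ww j).

Lemma IC_P (G : graph) (N : seq 'I_(gv G) -> Prop) k l (T : tmap (gv G) k l) :
  NG N -> IC N T -> Pinv T /\ Psupp N T.
Proof.
move=> hN h.
have hs : Psupp N T.
  move=> j i nz; apply/asboolP; apply: contraNT nz => nB.
  have := h j i 1%g (@in_Aut1 G) (ww i).
  rewrite invg1 !pf1 (negbTE nB) addr0.
  have -> : `[< N (rev (ww i) ++ ww i) >] by apply/asboolP; exact: N_self.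
  by move=> ->.
split=> // s hsA j i.
have := h (pf s j) i s hsA (ww (pf s j)).
rewrite pfK.
have -> : `[< N (rev (ww (pf s j)) ++ ww (pf s j)) >] by apply/asboolP; exact: N_self.
case: asboolP => hA.
  by move/eqP; rewrite addr_eq0 opprK => /eqP.
rewrite add0r => /eqP; rewrite oppr_eq0 => /eqP ->.
apply/eqP; apply: contraT => nz; case: hA; apply: N_rev => //; exact: hs.
Qed.

Lemma P_IC (G : graph) (N : seq 'I_(gv G) -> Prop) k l (T : tmap (gv G) k l) :
  NG N -> Pinv T -> Psupp N T -> IC N T.
Proof.
move=> hN hi hs j i' s hsA w.
have -> : T (pf s^-1 j) i' = T j (pf s i').
  by rewrite -(hi s hsA) pfVK.
have [->|nz] := eqVneq (T j (pf s i')) 0.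
  by rewrite oppr0; case: ifP; case: ifP; rewrite ?addr0.
have hx := hs _ _ nz.
have -> : `[< N (rev w ++ ww (pf s i')) >] = `[< N (rev w ++ ww j) >].
  apply/asboolP/asboolP => h1.
    exact: N_trans h1 hx.
  exact: N_trans h1 (N_rev hN hx).
by case: ifP; rewrite ?addr0 // subrr.
Qed.
Local Open Scope ring_scope.

Lemma span_ext (F : fibration) (G : graph) k l (T T' : tmap (gv G) k l) :
  (forall j i, T j i = T' j i) -> in_span_TK F T -> in_span_TK F T'.
Proof. move=> e [s [h1 h2]]; exists s; split=> // j i; rewrite -e; exact: h2. Qed.

Lemma span_sum (F : fibration) (G : graph) k l (I : Type) (r : seq I) (P : pred I)
   (c : I -> CC) (Ts : I -> tmap (gv G) k l) :
  (forall x, P x -> in_span_TK F (Ts x)) ->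
  in_span_TK F (fun j i => \sum_(x <- r | P x) c x * Ts x j i).
Proof.
move=> hT; elim: r => [|x r [s2 [h21 h22]]].
  by exists [::]; split=> // j i; rewrite !big_nil.
case Px: (P x); last first.
  by exists s2; split=> // j i; rewrite big_cons Px h22.
have [s1 [h11 h12]] := hT x Px.
exists ([seq (p.1, c x * p.2) | p <- s1] ++ s2); split.
  move=> p /(List.in_app_or _ _ _) [|]; last exact: h21.
  by case/(List.in_map_iff _ _ _) => q [<- /h11].
move=> j i; rewrite big_cons Px big_cat big_map h12 h22 mulr_sumr.
by congr (_ + _); apply: eq_bigr => p _; rewrite mulrA.
Qed.

Lemma span_TK (F : fibration) (G : graph) k l (K : bgraph k l) :
  in_category F K -> in_span_TK F (@TK G k l K).
Proof.
move=> h; exists [:: (K, 1)]; split.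
  by move=> p [<-|[]].
by move=> j i; rewrite big_cons big_nil mul1r addr0.
Qed.

Definition homset (G : graph) k l (K : bgraph k l) (j : {ffun 'I_l -> 'I_(gv G)})
   (i : {ffun 'I_k -> 'I_(gv G)}) :=
  [set phi : {ffun 'I_(gv (bg K)) -> 'I_(gv G)} |
                 [&& is_hom phi,
                     [forall t, phi (tnth (@bg_in _ _ K) t) == i t] &
                     [forall t, phi (tnth (@bg_out _ _ K) t) == j t]]].

Lemma TKE (G : graph) k l (K : bgraph k l) j i : @TK G k l K j i = #|homset K j i|%:R.
Proof. by []. Qed.

Lemma hom_aut (G : graph) (K : graph) (s : {perm 'I_(gv G)}) (phi : {ffun 'I_(gv K) -> 'I_(gv G)}) :
  in_Aut s -> is_hom [ffun x => s (phi x)] = is_hom phi.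
Proof.
move=> h; rewrite /is_hom; apply: eq_forallb => x; apply: eq_forallb => y.
by rewrite !ffunE -h.
Qed.

Lemma homset_le (G : graph) k l (K : bgraph k l) (s : {perm 'I_(gv G)})
  (j : {ffun 'I_l -> 'I_(gv G)}) (i : {ffun 'I_k -> 'I_(gv G)}) : in_Aut s ->
  (#|homset K (pf s j) (pf s i)| <= #|homset K j i|)%N.
Proof.
move=> hs.
pose f := fun phi : {ffun 'I_(gv (bg K)) -> 'I_(gv G)} => [ffun x => s (phi x)].
apply: leq_trans (leq_imset_card f (homset K j i)).
apply: subset_leq_card; apply/subsetP => psi.
rewrite inE => /and3P [hh ha hb].
apply/imsetP; exists [ffun x => (s^-1)%g (psi x)].
  rewrite inE hom_aut ?hh; last exact: in_AutV.
  apply/and3P; split => //.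
    apply/forallP => t; rewrite ffunE (eqP (forallP ha t)) ffunE -permM mulgV perm1 //.
  apply/forallP => t; rewrite ffunE (eqP (forallP hb t)) ffunE -permM mulgV perm1 //.
by apply/ffunP => x; rewrite /f !ffunE -permM mulVg perm1.
Qed.

Lemma TK_inv (G : graph) k l (K : bgraph k l) : Pinv (@TK G k l K).
Proof.
move=> s hs j i; rewrite !TKE; congr (_%:R); apply/eqP; rewrite eqn_leq homset_le //.
have := homset_le K (pf s j) (pf s i) (in_AutV hs); by rewrite !pfK.
Qed.
Local Open Scope ring_scope.

Lemma dunion_sym (K H : graph) : symmetric (@dunion_adj K H).
Proof.
move=> u v; rewrite /dunion_adj; case: (split u) => x; case: (split v) => y //; exact: gsym.
Qed.

Definition DU (K H : graph) : graph := @Graph (gv K + gv H) (@dunion_adj K H) (@dunion_sym K H).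

Lemma easy_NG (F : fibration) (G : graph) : easy_graph_fibration F -> (exists a, F G a) -> NG (F G).
Proof.
move=> [[hgeq [_ [_ [_ [hF1 _]]]]] _] hne; split; [exact: hgeq | exact: hF1].
Qed.

Lemma map_tval (T : eqType) (V : Type) n (a : n.-tuple T) (phi : T -> V) (i : 'I_n -> V) :
  (forall t, phi (tnth a t) = i t) -> map phi a = map i (enum 'I_n).
Proof.
move=> h; rewrite -[in LHS](map_tnth_enum a) -map_comp; apply: eq_map => t /=; exact: h.
Qed.

Lemma hom_word (F : fibration) (G : graph) k l (K : bgraph k l) (phi : {ffun 'I_(gv (bg K)) -> 'I_(gv G)}) :
  easy_graph_fibration F -> (exists a, F G a) -> in_category F K -> is_hom phi ->
  F G (map phi (rev (@bg_in _ _ K) ++ @bg_out _ _ K)).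
Proof.
move=> hE hne hK hphi.
have hN := easy_NG hE hne.
move: hE => [[hgeq [_ [_ [_ [hF1 [_ hF3]]]]]] hF4].
set c := rev (@bg_in _ _ K) ++ @bg_out _ _ K.
have hG0 : F G [::] by case: hN => _ [].
have hDU : F (DU (bg K) G) (map (fun x => lshift (gv G) x) c ++ [::]).
  have := @hF3 (bg K) G c [::] (fun _ _ => false) hK hG0 _ (DU (bg K) G) id.
  apply.
  - by split.
  - split; first by move=> i; exists i.
    move=> i j; apply/idP/existsP => [h|[x /existsP [y /and3P [/eqP <- /eqP <- //]]]].
    by exists i; apply/existsP; exists j; rewrite !eqxx.
  - move=> u v; split; first by left.
    by case=> // [[x [y []]]].
pose qq := fun u : 'I_(gv (bg K) + gv G) => match split u with inl x => phi x | inr y => y end.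
have := @hF4 (DU (bg K) G) (ex_intro _ _ hDU) G qq _ _ hDU.
have -> : map qq (map (fun x => lshift (gv G) x) c ++ [::]) = map phi c.
  rewrite cats0 -map_comp; apply: eq_map => x /=.
  by rewrite /qq (unsplitK (inl _ x)).
apply; split.
  by move=> y; exists (rshift (gv (bg K)) y); rewrite /qq (unsplitK (inr _ y)).
move=> i j; apply/idP/existsP => [h|[x /existsP [y /and3P [/eqP <- /eqP <-]]]].
  exists (rshift (gv (bg K)) i); apply/existsP; exists (rshift (gv (bg K)) j).
  by rewrite /qq /= /dunion_adj !(unsplitK (inr _ _)) !eqxx.
rewrite /qq /= /dunion_adj.
case: (split x) => x'; case: (split y) => y' //.
by move=> h; move/forallP: hphi => /(_ x') /forallP /(_ y') /implyP; apply.
Qed.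

Lemma TK_supp (F : fibration) (G : graph) k l (K : bgraph k l) :
  easy_graph_fibration F -> (exists a, F G a) -> in_category F K ->
  Psupp (F G) (@TK G k l K).
Proof.
move=> hE hne hK j i; rewrite TKE; case: (set_0Vmem (homset K j i)) => [->|[phi]].
  by rewrite cards0 eqxx.
rewrite inE => /and3P [hh ha hb] _.
have := hom_word hE hne hK hh.
rewrite map_cat map_rev (map_tval (i := i)) ?(map_tval (i := j)) //.
  by move=> t; apply/eqP; exact: (forallP hb t).
by move=> t; apply/eqP; exact: (forallP ha t).
Qed.

Lemma sum_nz (I : Type) (s : seq I) (f : I -> CC) :
  \sum_(p <- s) f p != 0 -> exists p, List.In p s /\ f p != 0.
Proof.
elim: s => [|x s IH]; first by rewrite big_nil eqxx.
rewrite big_cons; have [h0|nz] := eqVneq (f x) 0.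
  by rewrite h0 add0r => /IH [p [hp nz]]; exists p; split => //; right.
by move=> _; exists x; split => //; left.
Qed.

Lemma span_P (F : fibration) (G : graph) k l (T : tmap (gv G) k l) :
  easy_graph_fibration F -> (exists a, F G a) -> in_span_TK F T ->
  Pinv T /\ Psupp (F G) T.
Proof.
move=> hE hne [s [h1 h2]]; split.
  by move=> sg hs j i; rewrite !h2; apply: eq_bigr => p _; rewrite TK_inv.
move=> j i; rewrite h2 => /sum_nz [p [ps]].
rewrite mulf_eq0 negb_or => /andP [_ nz].
exact: TK_supp hE hne (h1 p ps) j i nz.
Qed.
Local Close Scope ring_scope.

Definition Qset (K : graph) (T : finType) (f : 'I_(gv K) -> T) : {set T} := f @: [set: 'I_(gv K)].

Definition qv (K : graph) (T : finType) (f : 'I_(gv K) -> T) (x : 'I_(gv K)) : 'I_#|Qset f| :=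
  enum_rank_in (imset_f f (in_setT x)) (f x).

Lemma qv_val (K : graph) (T : finType) (f : 'I_(gv K) -> T) x : enum_val (qv f x) = f x.
Proof. rewrite /qv. apply: enum_rankK_in. apply: imset_f. by rewrite inE. Qed.

Lemma qv_eq (K : graph) (T : finType) (f : 'I_(gv K) -> T) x y : (qv f x == qv f y) = (f x == f y).
Proof.
apply/eqP/eqP => [h|h]; first by rewrite -(qv_val f x) -(qv_val f y) h.
by apply: enum_val_inj; rewrite !qv_val.
Qed.

Lemma qv_surj (K : graph) (T : finType) (f : 'I_(gv K) -> T) (u : 'I_#|Qset f|) : exists x, qv f x = u.
Proof.
have := enum_valP u; case/imsetP => x _ hx; exists x.
by apply: enum_val_inj; rewrite qv_val.
Qed.

Definition Qadj (K : graph) (T : finType) (f : 'I_(gv K) -> T) : rel 'I_#|Qset f| :=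
  fun u v => [exists x, exists y, [&& qv f x == u, qv f y == v & @gadj K x y]].

Lemma Qsym (K : graph) (T : finType) (f : 'I_(gv K) -> T) : symmetric (@Qadj K T f).
Proof.
move=> u v; apply/existsP/existsP => [[x /existsP [y /and3P [h1 h2 h3]]]|[x /existsP [y /and3P [h1 h2 h3]]]];
  exists y; apply/existsP; exists x; by rewrite h1 h2 gsym h3.
Qed.

Definition Quot (K : graph) (T : finType) (f : 'I_(gv K) -> T) : graph := Graph (@Qsym K T f).

Lemma Quot_quot (K : graph) (T : finType) (f : 'I_(gv K) -> T) :
  is_quotient (@gadj K) (qv f : 'I_(gv K) -> 'I_(gv (@Quot K T f))).
Proof.
split.
  exact: qv_surj.
move=> i j; reflexivity.
Qed.

Lemma Quot_lt (K : graph) (T : finType) (f : 'I_(gv K) -> T) :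
  ~~ injectiveb f -> (gv (@Quot K T f) < gv K)%N.
Proof.
move=> ni; rewrite /= /Qset.
have := leq_imset_card f [set: 'I_(gv K)]; rewrite cardsT card_ord leq_eqVlt.
case/orP => // /eqP h; case/injectiveP: ni => x y.
have : #|f @: [set: 'I_(gv K)]| == #|[set: 'I_(gv K)]| by rewrite h cardsT card_ord.
by move/imset_injP => hi; apply: hi; rewrite inE.
Qed.
Local Close Scope ring_scope.

Definition kern m n (phi : {ffun 'I_m -> 'I_n}) : {ffun 'I_m -> {set 'I_m}} :=
  [ffun x => [set y | phi y == phi x]].

Lemma kern_eq m n (phi : {ffun 'I_m -> 'I_n}) x y : (kern phi x == kern phi y) = (phi x == phi y).
Proof.
apply/eqP/eqP => [h|h].
  have : x \in kern phi x by rewrite ffunE inE.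
  by rewrite h ffunE inE => /eqP.
by rewrite !ffunE; apply/setP => z; rewrite !inE h.
Qed.

Lemma kern_inj m n (phi phi1 : {ffun 'I_m -> 'I_n}) :
  kern phi = kern phi1 -> injectiveb phi = injectiveb phi1.
Proof.
move=> e; apply/injectiveP/injectiveP => h x y /eqP.
  by rewrite -kern_eq -e kern_eq => /eqP /h.
by rewrite -kern_eq e kern_eq => /eqP /h.
Qed.

Definition KQ k l (K : bgraph k l) (kap : {ffun 'I_(gv (bg K)) -> {set 'I_(gv (bg K))}}) : bgraph k l :=
  @BGraph k l (@Quot (bg K) _ kap) (map_tuple (@qv (bg K) _ kap) (@bg_in _ _ K))
    (map_tuple (@qv (bg K) _ kap) (@bg_out _ _ K)).

Arguments KQ {k l} K kap.

Definition injset (G : graph) k l (K : bgraph k l) (j : {ffun 'I_l -> 'I_(gv G)})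
   (i : {ffun 'I_k -> 'I_(gv G)}) := [set phi in homset K j i | injectiveb phi].

Arguments injset {G k l} K j i.

Definition injK (G : graph) k l (K : bgraph k l) : tmap (gv G) k l :=
  fun j i => (#|injset K j i|%:R)%R.

Arguments injK {G k l} K _ _.

Lemma count_kern (G : graph) k l (K : bgraph k l) (phi0 : {ffun 'I_(gv (bg K)) -> 'I_(gv G)})
   (j : {ffun 'I_l -> 'I_(gv G)}) (i : {ffun 'I_k -> 'I_(gv G)}) :
  #|[set phi in homset K j i | kern phi == kern phi0]| = #|injset (KQ K (kern phi0)) j i|.
Proof.
set kap := kern phi0.
set q := @qv (bg K) _ kap.
have hq : forall x y, (q x == q y) = (phi0 x == phi0 y).
  by move=> x y; rewrite qv_eq kern_eq.
pose g := fun psi : {ffun 'I_(gv (bg (KQ K kap))) -> 'I_(gv G)} => [ffun x => psi (q x)].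
have ginj : injective g.
  move=> p1 p2 /ffunP e; apply/ffunP => u; have [x <-] := qv_surj u.
  by have := e x; rewrite !ffunE.
rewrite -(card_imset _ ginj); apply: eq_card => phi.
rewrite inE; apply/andP/imsetP.
  case; rewrite inE => /and3P [hh ha hb] /eqP hk.
  have hphi : forall x y, (phi x == phi y) = (q x == q y).
    by move=> x y; rewrite hq -!kern_eq hk.
  have hle : (#|Qset kap| <= gv (bg K))%N.
    have := leq_imset_card kap [set: _]; by rewrite cardsT card_ord.
  pose psi := [ffun u : 'I_#|Qset kap| => phi (odflt (widen_ord hle u) [pick x | q x == u])].
  have hpsi : forall x, psi (q x) = phi x.
    move=> x; rewrite ffunE; case: pickP => [x' hx'|none] /=.
      by apply/eqP; rewrite hphi.
    by have := none x; rewrite eqxx.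
  exists psi; last by apply/ffunP => x; rewrite ffunE hpsi.
  rewrite !inE; apply/andP; split.
    apply/and3P; split.
    - apply/forallP => u; apply/forallP => v; apply/implyP.
      case/existsP => x /existsP [y /and3P [/eqP <- /eqP <- hxy]].
      by rewrite !hpsi; move/forallP: hh => /(_ x) /forallP /(_ y) /implyP; apply.
    - by apply/forallP => t; rewrite tnth_map hpsi; exact: (forallP ha t).
    - by apply/forallP => t; rewrite tnth_map hpsi; exact: (forallP hb t).
  apply/injectiveP => u v; have [x <-] := qv_surj u; have [y <-] := qv_surj v.
  by rewrite !hpsi => /eqP; rewrite hphi => /eqP.
case=> psi; rewrite !inE => /andP [/and3P [hh ha hb] /injectiveP hi] ->.
split.
  apply/and3P; split.
  - apply/forallP => x; apply/forallP => y; apply/implyP => hxy; rewrite !ffunE.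
    move/forallP: hh => /(_ (q x)) /forallP /(_ (q y)) /implyP; apply.
    by apply/existsP; exists x; apply/existsP; exists y; rewrite !eqxx.
  - by apply/forallP => t; rewrite ffunE; have := forallP ha t; rewrite tnth_map.
  - by apply/forallP => t; rewrite ffunE; have := forallP hb t; rewrite tnth_map.
apply/eqP/ffunP => x; apply/setP => y; rewrite !ffunE !inE.
by rewrite /g ffunE (inj_eq hi) hq.
Qed.
Local Close Scope ring_scope.

Definition KS (G : graph) k l (K : bgraph k l) :=
  [set kern phi | phi in [set phi : {ffun 'I_(gv (bg K)) -> 'I_(gv G)} | ~~ injectiveb phi]].
Arguments KS G {k l} K.

Lemma decomp (G : graph) k l (K : bgraph k l) (j : {ffun 'I_l -> 'I_(gv G)})
   (i : {ffun 'I_k -> 'I_(gv G)}) :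
  #|homset K j i| = (#|injset K j i| +
     \sum_(kap in KS G K) #|[set phi in homset K j i | kern phi == kap]|)%N.
Proof.
rewrite -(cardID [pred phi : {ffun 'I_(gv (bg K)) -> 'I_(gv G)} | injectiveb phi] (homset K j i)); congr (_ + _)%N.
  by apply: eq_card => phi; rewrite !inE.
rewrite -sum1_card (partition_big (fun phi => kern phi) (fun kap => kap \in KS G K)).
  apply: eq_bigr => kap /imsetP [phi1]; rewrite inE => hn1 ->.
  rewrite -sum1_card; apply: eq_bigl => phi; rewrite !inE.
  case: (boolP (kern phi == kern phi1)) => [/eqP e|]; last by rewrite !andbF.
  by rewrite (kern_inj e) hn1 !andbT.
move=> phi; rewrite !inE => /andP [hn _]; apply/imsetP; exists phi => //.
by rewrite inE.
Qed.

Lemma TK_decomp (G : graph) k l (K : bgraph k l) (j : {ffun 'I_l -> 'I_(gv G)})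
   (i : {ffun 'I_k -> 'I_(gv G)}) :
  @TK G k l K j i = (injK K j i + \sum_(kap in KS G K) injK (KQ K kap) j i)%R.
Proof.
rewrite TKE decomp natrD natr_sum; congr (_ + _)%R.
apply: eq_bigr => kap /imsetP [phi1 _ ->].
by rewrite count_kern.
Qed.

Lemma span_add (F : fibration) (G : graph) k l (T1 T2 : tmap (gv G) k l) :
  in_span_TK F T1 -> in_span_TK F T2 -> in_span_TK F (fun j i => T1 j i + T2 j i)%R.
Proof.
move=> h1 h2.
have := @span_sum F G k l bool [:: true; false] predT (fun _ => 1%R)
   (fun b => if b then T1 else T2) (fun b _ => if b as b' return in_span_TK F (if b' then T1 else T2) then h1 else h2).
apply: span_ext => j i; by rewrite !big_cons big_nil /= !mul1r addr0.
Qed.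

Lemma inj_span (F : fibration) (G : graph) k l :
  easy_graph_fibration F -> (exists a, F G a) ->
  forall K : bgraph k l, in_category F K -> in_span_TK F (@injK G k l K).
Proof.
move=> hE hne K.
have [m] := ubnP (gv (bg K)); elim: m K => // m IH K /ltnSE hm hK.
have hF4 := hE.2.
pose T := fun j i => (@TK G k l K j i + \sum_(kap in KS G K) (-1) * injK (KQ K kap) j i)%R.
apply: (@span_ext F G k l T).
  move=> j i; rewrite /T TK_decomp -addrA.
  rewrite -big_split /= big1 ?addr0 // => kap _.
  by rewrite mulN1r addrN.
apply: span_add; first exact: span_TK.
apply: span_sum => kap /imsetP [phi1]; rewrite inE => hn1 ->.
apply: IH.
  apply: (leq_trans _ hm); apply: Quot_lt.
  by apply: contra hn1 => /injectiveP hi; apply/injectiveP => x y /eqP; rewrite -kern_eq => /eqP /hi.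
have := hF4 (bg K) (ex_intro (fun a => F (bg K) a) _ hK) _ _ (Quot_quot (kern phi1)) _ hK.
by rewrite map_cat map_rev.
Qed.
Local Close Scope ring_scope.

Lemma inj_aut (G : graph) (phi : {ffun 'I_(gv G) -> 'I_(gv G)}) :
  @is_hom G G phi -> injective phi -> forall x y, @gadj G x y = @gadj G (phi x) (phi y).
Proof.
move=> hh hi.
pose E := [set p : 'I_(gv G) * 'I_(gv G) | @gadj G p.1 p.2].
pose g := fun p : 'I_(gv G) * 'I_(gv G) => (phi p.1, phi p.2).
have ginj : injective g by move=> [a b] [c d] [/hi -> /hi ->].
have sub : g @: E \subset E.
  apply/subsetP => p /imsetP [[a b]]; rewrite inE /= => hab ->; rewrite inE /=.
  by move/forallP: hh => /(_ a) /forallP /(_ b) /implyP; apply.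
have eqE : g @: E = E by apply/eqP; rewrite eqEcard sub (card_imset _ ginj) leqnn.
move=> x y; apply/idP/idP => h.
  by move/forallP: hh => /(_ x) /forallP /(_ y) /implyP; apply.
have : (phi x, phi y) \in g @: E by rewrite eqE inE.
case/imsetP => [[a b]]; rewrite inE /= => hab [/hi ea /hi eb].
by rewrite ea eb.
Qed.

Definition BGi (G : graph) k l (i0 : {ffun 'I_k -> 'I_(gv G)}) (j0 : {ffun 'I_l -> 'I_(gv G)}) : bgraph k l :=
  @BGraph k l G [tuple i0 t | t < k] [tuple j0 t | t < l].

Definition IHs (G : graph) := [set phi : {ffun 'I_(gv G) -> 'I_(gv G)} | @is_hom G G phi && injectiveb phi].

Lemma injK_BGi (G : graph) k l (i0 i' : {ffun 'I_k -> 'I_(gv G)}) (j0 j' : {ffun 'I_l -> 'I_(gv G)}) :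
  injK (BGi i0 j0) j' i' =
  (\sum_(phi in IHs G) ([forall t, phi (i0 t) == i' t] && [forall t, phi (j0 t) == j' t])%:R)%R.
Proof.
rewrite /injK -sum1_card natr_sum big_mkcond /= [RHS]big_mkcond /=.
apply: eq_bigr => phi _; rewrite !inE.
have -> : [forall t, phi (tnth [tuple i0 t | t < k] t) == i' t] = [forall t, phi (i0 t) == i' t].
  by apply: eq_forallb => t; rewrite tnth_mktuple.
have -> : [forall t, phi (tnth [tuple j0 t | t < l] t) == j' t] = [forall t, phi (j0 t) == j' t].
  by apply: eq_forallb => t; rewrite tnth_mktuple.
by case: (is_hom phi); case: (injectiveb phi); case: [forall t, _]; case: [forall t, _].
Qed.
Local Open Scope ring_scope.

Lemma main_sum (G : graph) k l (T : tmap (gv G) k l) (j' : {ffun 'I_l -> 'I_(gv G)})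
  (i' : {ffun 'I_k -> 'I_(gv G)}) : Pinv T ->
  \sum_(x : {ffun 'I_l -> 'I_(gv G)} * {ffun 'I_k -> 'I_(gv G)}) T x.1 x.2 * injK (BGi x.2 x.1) j' i'
  = T j' i' * #|IHs G|%:R.
Proof.
move=> hT.
under eq_bigr => x _ do rewrite injK_BGi mulr_sumr.
rewrite exchange_big /= -sum1_card natr_sum mulr_sumr.
apply: eq_bigr => phi; rewrite inE => /andP [hh /injectiveP hi].
pose s := perm hi.
have hs : in_Aut s by move=> x y; rewrite !permE; exact: inj_aut.
have hs' := in_AutV hs.
rewrite mulr1 (bigD1 (pf s^-1 j', pf s^-1 i')) //= big1 ?addr0.
  have -> : [forall t, phi (pf s^-1 i' t) == i' t] && [forall t, phi (pf s^-1 j' t) == j' t].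
    by apply/andP; split; apply/forallP => t; rewrite ffunE -(permE hi) -permM mulVg perm1.
  by rewrite mulr1 hT.
move=> [j0 i0] /= hne.
case: (boolP [forall t, phi (i0 t) == i' t]) => [/forallP ha|]; last by rewrite mulr0.
case: (boolP [forall t, phi (j0 t) == j' t]) => [/forallP hb|]; last by rewrite mulr0.
case/negP: hne; apply/eqP; congr (_, _);
  [apply/ffunP => t; rewrite ffunE -(eqP (hb t)) | apply/ffunP => t; rewrite ffunE -(eqP (ha t))];
  by rewrite -(permE hi) -permM mulgV perm1.
Qed.
Local Open Scope ring_scope.

Lemma P_span (F : fibration) (G : graph) k l (T : tmap (gv G) k l) :
  easy_graph_fibration F -> (exists a, F G a) ->
  Pinv T -> Psupp (F G) T -> in_span_TK F T.
Proof.
move=> hE hne hi hs.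
set c : CC := #|IHs G|%:R.
have cnz : c != 0.
  rewrite /c pnatr_eq0 -lt0n; apply/card_gt0P; exists [ffun x => x].
  rewrite inE; apply/andP; split.
    by apply/forallP => x; apply/forallP => y; rewrite !ffunE; apply/implyP.
  by apply/injectiveP => x y; rewrite !ffunE.
have := @span_sum F G k l ({ffun 'I_l -> 'I_(gv G)} * {ffun 'I_k -> 'I_(gv G)})%type
  (index_enum _)
  (fun x => T x.1 x.2 != 0) (fun x => T x.1 x.2 / c) (fun x => injK (BGi x.2 x.1)).
move=> h; apply: (span_ext _ (h _)).
  move=> j i /=.
  rewrite -[RHS](mulfK cnz) -(main_sum j i hi) mulr_suml.
  rewrite [LHS]big_mkcond /=; apply: eq_bigr => x _.
  case: ifP => [_|/negbFE/eqP ->]; first by rewrite mulrAC.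
  by rewrite !mul0r.
move=> [j0 i0] /= nz; apply: inj_span => //.
rewrite /in_category /=.
have e1 : forall m (f : {ffun 'I_m -> 'I_(gv G)}), tval [tuple f t | t < m] = ww f.
  move=> m f; rewrite -(map_id (tval _)); apply: map_tval => t; exact: tnth_mktuple.
rewrite !e1; exact: hs.
Qed.

Local Close Scope ring_scope.

Theorem theorem4p1 (G : graph) (F : fibration) :
  easy_graph_fibration F ->
  (exists a, F G a) ->
  forall (k l : nat) (T : tmap (gv G) k l),
    is_intertwiner (F G) T <-> in_span_TK F T.
Proof.
move=> hE hne k l T; have hN := easy_NG hE hne; split.
  move/interE => /(IC_P hN) [hi hs]; exact: P_span.
move=> hsp; have [hi hs] := span_P hE hne hsp.
by apply/interE; apply: P_IC.
Qed.
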